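(* Let $k\ge 2$. For every proper coloring of the gadget $A(k)$ using at most $2k-2$ colors, the gadget is exactly one of row-colorful and column-colorful (i.e., it is row-colorful or column-colorful, but not both).
   Context: The gadget $A(k)$ is the graph with node set $[k]\times[k]$ in which $(i,j)$ and $(i',j')$ are adjacent iff $i\ne i'$ and $j\ne j'$. For $i\in[k]$, the $i$-th row is $\{(i,j):j\in[k]\}$; for $j\in[k]$, the $j$-th column is $\{(i,j):i\in[k]\}$. Given a proper coloring of $A(k)$, a row (resp. column) is colorful if its $k$ nodes receive pairwise distinct colors; the gadget is row-colorful if it has a colorful row and column-colorful if it has a colorful column. *)

(* Defs.v *)
From mathcomp Require Import all_boot.
Set Implicit Arguments. Unset Strict Implicit. Unset Printing Implicit Defensive.

Definition gadget_adj (k : nat) : rel ('I_k * 'I_k) :=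
  fun u v => (u.1 != v.1) && (u.2 != v.2).

Definition proper_coloring (k m : nat) (c : 'I_k * 'I_k -> 'I_m) : Prop :=
  forall u v, gadget_adj u v -> c u != c v.

Definition colorful_row (k m : nat) (c : 'I_k * 'I_k -> 'I_m) (i : 'I_k) : bool :=
  injectiveb (fun j : 'I_k => c (i, j)).

Definition colorful_col (k m : nat) (c : 'I_k * 'I_k -> 'I_m) (j : 'I_k) : bool :=
  injectiveb (fun i : 'I_k => c (i, j)).

Definition row_colorful (k m : nat) (c : 'I_k * 'I_k -> 'I_m) : bool :=
  [exists i, colorful_row c i].

Definition column_colorful (k m : nat) (c : 'I_k * 'I_k -> 'I_m) : bool :=
  [exists j, colorful_col c j].

(* Main.v *)
Require Import Defs.
From mathcomp Require Import all_boot.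
From mathcomp Require Import zify.

Lemma not_inj_ex (T : finType) (U : eqType) (f : T -> U) :
  ~~ injectiveb f -> exists a b, a != b /\ f a = f b.
Proof.
move=> H.
case: (boolP [exists a, exists b, (a != b) && (f a == f b)]).
  by move=> /existsP[a /existsP[b /andP[Hab /eqP E]]]; exists a, b.
move=> /existsPn H2; exfalso; move/negP: H; apply.
apply/injectiveP => x y E; apply/eqP.
move: (H2 x) => /existsPn/(_ y); rewrite E eqxx andbT.
by rewrite negbK.
Qed.

Theorem mainTheorem14 (k m : nat) (c : 'I_k * 'I_k -> 'I_m) :
  2 <= k -> m <= 2 * k - 2 -> proper_coloring c ->
  (row_colorful c || column_colorful c) && ~~ (row_colorful c && column_colorful c).
Proof.
move=> Hk Hm Hc.
have adj : forall i j i' j', i != i' -> j != j' -> c (i, j) != c (i', j').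
  by move=> i j i' j' Hi Hj; apply: Hc; rewrite /gadget_adj /= Hi Hj.
apply/andP; split.
  case: (boolP (row_colorful c)) => //= Hr.
  case: (boolP (column_colorful c)) => // Hcl.
  exfalso.
  move/existsPn: Hr => Hr; move/existsPn: Hcl => Hcl.
  have [r Hr'] : exists r : 'I_k -> 'I_m, forall i,
      exists a b, a != b /\ c (i, a) = r i /\ c (i, b) = r i.
    apply: (@fin_all_exists _ (fun _ => 'I_m)
      (fun i (col : 'I_m) => exists a b, a != b /\ c (i, a) = col /\ c (i, b) = col)) => i.
    have [a [b [Hab E]]] := @not_inj_ex _ _ (fun x => c (i, x)) (Hr i).
    by exists (c (i, a)), a, b.
  have [s Hs'] : exists s : 'I_k -> 'I_m, forall j,
      exists a b, a != b /\ c (a, j) = s j /\ c (b, j) = s j.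
    apply: (@fin_all_exists _ (fun _ => 'I_m)
      (fun j (col : 'I_m) => exists a b, a != b /\ c (a, j) = col /\ c (b, j) = col)) => j.
    have [a [b [Hab E]]] := @not_inj_ex _ _ (fun x => c (x, j)) (Hcl j).
    by exists (c (a, j)), a, b.
  pose f := fun x : 'I_k + 'I_k => match x with inl i => r i | inr j => s j end.
  have finj : injective f.
    case=> [i|j] [i'|j'] /= E.
    - apply/eqP; apply/negPn/negP => Hii'.
      have [a [b [Hab [Ea Eb]]]] := Hr' i.
      have [a' [b' [Hab' [Ea' Eb']]]] := Hr' i'.
      case: (eqVneq a a') => [Eaa|Naa].
        have Nb : b != a' by rewrite -Eaa eq_sym.
        by move: (adj i b i' a' Hii' Nb); rewrite Eb Ea' E eqxx.
      by move: (adj i a i' a' Hii' Naa); rewrite Ea Ea' E eqxx.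
    - exfalso.
      have [a [b [Hab [Ea Eb]]]] := Hr' i.
      have [a' [b' [Hab' [Ea' Eb']]]] := Hs' j'.
      have [x [Hx Ex]] : exists x, x != j' /\ c (i, x) = r i.
        case: (eqVneq a j') => [E0|N]; last by exists a.
        by exists b; split => //; rewrite -E0 eq_sym.
      have [y [Hy Ey]] : exists y, i != y /\ c (y, j') = s j'.
        case: (eqVneq a' i) => [Ey|N]; last by exists a'; rewrite eq_sym.
        by exists b'; split => //; rewrite -Ey.
      by move: (adj i x y j' Hy Hx); rewrite Ex Ey E eqxx.
    - exfalso.
      have [a [b [Hab [Ea Eb]]]] := Hr' i'.
      have [a' [b' [Hab' [Ea' Eb']]]] := Hs' j.
      have [x [Hx Ex]] : exists x, x != j /\ c (i', x) = r i'.
        case: (eqVneq a j) => [E0|N]; last by exists a.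
        by exists b; split => //; rewrite -E0 eq_sym.
      have [y [Hy Ey]] : exists y, i' != y /\ c (y, j) = s j.
        case: (eqVneq a' i') => [Ey|N]; last by exists a'; rewrite eq_sym.
        by exists b'; split => //; rewrite -Ey.
      by move: (adj i' x y j Hy Hx); rewrite Ex Ey E eqxx.
    - congr inr; apply/eqP; apply/negPn/negP => Hjj'.
      have [a [b [Hab [Ea Eb]]]] := Hs' j.
      have [a' [b' [Hab' [Ea' Eb']]]] := Hs' j'.
      case: (eqVneq a a') => [Eaa|Naa].
        have Nb : b != a' by rewrite -Eaa eq_sym.
        by move: (adj b j a' j' Nb Hjj'); rewrite Eb Ea' E eqxx.
      by move: (adj a j a' j' Naa Hjj'); rewrite Ea Ea' E eqxx.
  move: (@leq_card _ _ f finj); rewrite card_sum !card_ord; lia.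
apply/negP => /andP[/existsP[i Hi] /existsP[j Hj]].
move/injectiveP: Hi => Hi; move/injectiveP: Hj => Hj.
set A := [set c (i, x) | x : 'I_k].
set B := [set c (y, j) | y : 'I_k].
have cA : #|A| = k by rewrite card_imset // card_ord.
have cB : #|B| = k by rewrite card_imset // card_ord.
have cI : #|A :&: B| <= 1.
  rewrite -(cards1 (c (i, j))); apply: subset_leq_card.
  apply/subsetP => z /setIP[/imsetP[x _ ->] /imsetP[y _ E]].
  rewrite inE; apply/eqP.
  case: (eqVneq x j) => [->//|Nx].
  case: (eqVneq i y) => [Ey|Ny].
    by move: E; rewrite -Ey => /Hi ->.
  by move: (adj i x y j Ny Nx); rewrite E eqxx.
have := max_card (A :|: B); rewrite cardsU cA cB card_ord; lia.
Qed.
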